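(* Let $G$ be a $*$-graph in which every vertex has valency $4$ or $6$, and let $G'$ be an expansion of $G$. If $G'$ contains a Vassiliev obstruct, then $G$ contains a Vassiliev obstruct.
   Context: Graphs are finite and may have loops and multiple edges; each edge consists of two half-edges. A $*$-graph is a graph together with, for each vertex $a$ of valency $n$, an unoriented cyclic order $X_a$ of the half-edges at $a$, i.e. a bijection $X_a$ from the half-edges at $a$ to the vertices of the cycle graph $C_n$ (a cyclic order up to rotation and reversal). An $X$-graph is a $4$-regular graph with, at each vertex, a partition of its half-edges into two pairs of opposite half-edges; this is the same as a $*$-structure at each $4$-valent vertex (opposite = non-adjacent in the cyclic order). Expansion of a $6$-valent vertex $v$: label its half-edges $h_1,\dots,h_6$ so that $X_v$ is the cyclic order $(h_1,\dots,h_6)$; replace $v$ by a triangle on new vertices $p_1,p_2,p_3$, attach $h_1,h_2$ to $p_1$, $h_3,h_4$ to $p_2$, $h_5,h_6$ to $p_3$, with $X$-structures: at $p_1$, $h_1$ opposite the half-edge of $p_1p_2$ and $h_2$ opposite that of $p_1p_3$; at $p_2$, $h_3$ opposite that of $p_2p_3$ and $h_4$ opposite that of $p_2p_1$; at $p_3$, $h_5$ opposite that of $p_3p_1$ and $h_6$ opposite that of $p_3p_2$. An expansion of $G$ replaces every $6$-valent vertex in this way (choices of labeling made independently), the $4$-valent vertices keeping their structure. A cycle is a closed walk using no edge more than once (vertices may repeat). For edge-disjoint cycles $A,B$, a crossing is an occurrence of a common vertex $a$ where $A$ passes via half-edges $A_1,A_2$ and $B$ via $B_1,B_2$ with $X_a(A_1),X_a(B_1),X_a(A_2),X_a(B_2)$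 alternating in $C_n$ (for a $4$-valent vertex: each cycle passes straight through via a pair of opposite half-edges); crossings are counted with multiplicity over all such pairs of passages. A Vassiliev obstruct is a pair of edge-disjoint cycles with exactly one crossing. *)

(* Defs.v *)
From mathcomp Require Import all_boot.
Set Implicit Arguments. Unset Strict Implicit. Unset Printing Implicit Defensive.

(* A graph with half-edges: [vert h] is the vertex carrying half-edge [h],
   [opp h] is the other half of the edge containing [h].  [xpos h] is the
   position X_a(h) in the cycle graph C_n (vertices 0..n-1) of the
   *-structure at a = vert h. *)
Record sgraph := SGraph {
  sV : finType;
  sH : finType;
  vert : sH -> sV;
  opp : sH -> sH;
  xpos : sH -> nat }.

Section Graphs.
Variable G : sgraph.

Definition deg (v : sV G) : nat := #|[set h | vert h == v]|.

(* opp is a fixed-point-free involution (edges = pairs of half-edges), and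
   X_a is a bijection from the half-edges at a onto the vertices 0..deg a - 1
   of C_(deg a). *)
Definition wf_star_graph : Prop :=
  (forall h : sH G, opp (opp h) = h /\ opp h <> h) /\
  (forall h : sH G, xpos h < deg (vert h)) /\
  (forall h1 h2 : sH G, vert h1 = vert h2 -> xpos h1 = xpos h2 -> h1 = h2).

(* A closed walk traversing the edges h_1, ..., h_k: edge i is entered at
   half-edge h_i and left at opp h_i; no edge used twice. *)
Definition is_cycle (c : seq (sH G)) : bool :=
  [&& 0 < size c, uniq (c ++ map (@opp G) c)
    & cycle (fun h h' => vert (opp h) == vert h') c].

Definition passages (c : seq (sH G)) : seq (sH G * sH G) :=
  zip (map (@opp G) c) (rot 1 c).

Definition edge_disjoint (A B : seq (sH G)) : bool :=
  ~~ has (mem (B ++ map (@opp G) B)) (A ++ map (@opp G) A).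

Definition strictly_between (a c x : nat) : bool := (minn a c < x < maxn a c).

(* positions a, b, c, d of C_n occur alternately around the cycle:
   they are distinct and b, d lie in different arcs cut out by a and c *)
Definition alternating (a b c d : nat) : bool :=
  [&& uniq [:: a; b; c; d] &
      strictly_between a c b != strictly_between a c d].

Definition is_crossing (p q : sH G * sH G) : bool :=
  (vert p.1 == vert q.1) &&
  alternating (xpos p.1) (xpos q.1) (xpos p.2) (xpos q.2).

Definition crossings (A B : seq (sH G)) : nat :=
  count (fun pq => is_crossing pq.1 pq.2)
        [seq (p, q) | p <- passages A, q <- passages B].

Definition vassiliev_obstruct (A B : seq (sH G)) : Prop :=
  [/\ is_cycle A, is_cycle B, edge_disjoint A B & crossings A B = 1].

Definition has_vassiliev_obstruct : Prop :=
  exists A B, vassiliev_obstruct A B.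

(* A labeling choice for the expansion: at each 6-valent vertex v the labels
   lab h (in 0..5, meaning h = h_(lab h + 1)) list the half-edges at v in the
   cyclic order X_v, up to rotation and reversal. *)
Definition expansion_labeling (lab : sH G -> nat) : Prop :=
  forall v : sV G, deg v = 6 ->
  exists (r : nat) (s : bool), forall h : sH G, vert h = v ->
    lab h = (if s then (r + xpos h) %% 6 else (r + 6 - xpos h) %% 6).

End Graphs.

Section Expansion.
Variables (G : sgraph) (lab : sH G -> nat).

Definition V4 := {v : sV G | deg v != 6}.
Definition V6 := {v : sV G | deg v == 6}.
(* vertices of the expansion: non-6-valent vertices of G, and p_1,p_2,p_3
   (indices 0,1,2) for each 6-valent vertex *)
Definition exV : finType := (V4 + V6 * 'I_3)%type.
(* half-edges of the expansion: those of G, plus for each 6-valent v and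
   i : 'I_3 two triangle half-edges at p_i: (v,i,true) on the edge p_i p_(i+1)
   and (v,i,false) on the edge p_i p_(i-1) *)
Definition exH : finType := (sH G + V6 * 'I_3 * bool)%type.

Definition blk (h : sH G) : 'I_3 := inord (lab h %/ 2).

Definition ex_vert_old (h : sH G) : exV :=
  match (deg (vert h) == 6) as b return (deg (vert h) == 6) = b -> exV with
  | true => fun e => inr (exist (fun v => deg v == 6) (vert h) e, blk h)
  | false => fun e => inl (exist (fun v => deg v != 6) (vert h) (negbT e))
  end erefl.

Definition ex_vert (x : exH) : exV :=
  match x with
  | inl h => ex_vert_old h
  | inr (vi, _) => inr vi
  end.

Definition ex_opp (x : exH) : exH :=
  match x with
  | inl h => inl (opp h)
  | inr (v, i, true) => inr (v, ordS i, false)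
  | inr (v, i, false) => inr (v, ord_pred i, true)
  end.

(* X-structure at p_i: cyclic order (h_(2i+1), h_(2i+2), [p_i p_(i+1)],
   [p_i p_(i-1)]), so that h_(2i+1) is opposite the half-edge of p_i p_(i+1)
   and h_(2i+2) opposite the half-edge of p_i p_(i-1). *)
Definition ex_xpos (x : exH) : nat :=
  match x with
  | inl h => if deg (vert h) == 6 then lab h %% 2 else xpos h
  | inr (_, _, b) => if b then 2 else 3
  end.

Definition expand : sgraph := @SGraph exV exH ex_vert ex_opp ex_xpos.

End Expansion.

(* Main.v *)
Require Import Defs.
From mathcomp Require Import all_boot zify.
Set Implicit Arguments. Unset Strict Implicit. Unset Printing Implicit Defensive.

Definition lpass (K : sgraph) (y : sH K) (s : seq (sH K)) (z : sH K) : seq (sH K * sH K) :=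
  zip (opp y :: map (@opp K) s) (s ++ [:: z]).
Arguments lpass : simpl never.

Lemma lpass_cons K (y x : sH K) s z : lpass y (x :: s) z = (opp y, x) :: lpass x s z.
Proof. by []. Qed.

Lemma passages_cons K (y : sH K) s : passages (y :: s) = lpass y s y.
Proof. by rewrite /passages /lpass /= rot1_cons cats1. Qed.

Lemma lpass_cat K (y : sH K) s1 w s2 z : lpass y (s1 ++ w :: s2) z = lpass y s1 w ++ lpass w s2 z.
Proof. by elim: s1 y => [|x s1 IH] y //=; rewrite !lpass_cons IH. Qed.

Lemma path_lpass K (y : sH K) s z :
  path (fun h h' => vert (opp h) == vert h') y (s ++ [:: z]) =
  all (fun p => vert p.1 == vert p.2) (lpass y s z).
Proof. elim: s y => [|x s IH] y; first by rewrite /= andbT. by rewrite lpass_cons /= IH. Qed.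

Lemma cycle_lpass K (y : sH K) s :
  cycle (fun h h' => vert (opp h) == vert h') (y :: s) =
  all (fun p => vert p.1 == vert p.2) (lpass y s y).
Proof. by rewrite /= -cats1 path_lpass. Qed.

Lemma count_sum (T : Type) (f : pred T) s : count f s = \sum_(x <- s) f x.
Proof. by elim: s => [|x s IH] /=; rewrite ?big_nil ?big_cons ?IH. Qed.

Lemma count_allpairs (S T : Type) (f : pred (S * T)) s t :
  count f [seq (p, q) | p <- s, q <- t] = \sum_(p <- s) \sum_(q <- t) f (p, q).
Proof.
elim: s => [|x s IH]; first by rewrite big_nil.
by rewrite /= count_cat IH big_cons count_map count_sum.
Qed.

Lemma exchange_seq (I J : Type) (s : seq I) (t : seq J) (F : I -> J -> nat) :
  \sum_(i <- s) \sum_(j <- t) F i j = \sum_(j <- t) \sum_(i <- s) F i j.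
Proof.
elim: s => [|x s IH]; first by rewrite big_nil; symmetry; apply: big1 => j _; rewrite big_nil.
by rewrite big_cons IH -big_split /=; apply: eq_bigr => j _; rewrite big_cons.
Qed.

Lemma drop_zip' S T k (s : seq S) (t : seq T) : drop k (zip s t) = zip (drop k s) (drop k t).
Proof.
elim: k s t => [|k IH] [|x s] [|y t] //=.
- by case: (drop k t).
- by case: (drop k s).
Qed.

Lemma take_zip' S T k (s : seq S) (t : seq T) : take k (zip s t) = zip (take k s) (take k t).
Proof. by elim: k s t => [|k IH] [|x s] [|y t] //=; rewrite IH. Qed.

Lemma rot_zip' S T k (s : seq S) (t : seq T) : size s = size t -> rot k (zip s t) = zip (rot k s) (rot k t).
Proof. by move=> E; rewrite /rot zip_cat ?size_drop ?E // drop_zip' take_zip'. Qed.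

Lemma passages_rot K k (c : seq (sH K)) : passages (rot k c) = rot k (passages c).
Proof. by rewrite /passages map_rot rot_rot rot_zip' // size_map size_rot. Qed.

Lemma perm_rot' (T : eqType) k (s : seq T) : perm_eq (rot k s) s.
Proof. by rewrite perm_rot. Qed.

Definition crossS K (A B : seq (sH K)) : nat :=
  \sum_(p <- passages A) \sum_(q <- passages B) is_crossing p q.

Lemma crossingsE K (A B : seq (sH K)) : crossings A B = crossS A B.
Proof. by rewrite /crossings count_allpairs. Qed.

Lemma crossings_rotl K k (A B : seq (sH K)) : crossings (rot k A) B = crossings A B.
Proof. by rewrite !crossingsE /crossS passages_rot (perm_big _ (perm_rot' _ _)). Qed.

Lemma crossings_rotr K k (A B : seq (sH K)) : crossings A (rot k B) = crossings A B.
Proof.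
rewrite !crossingsE /crossS; apply: eq_bigr => p _.
by rewrite passages_rot (perm_big _ (perm_rot' _ _)).
Qed.

Lemma is_cycle_rot K k (c : seq (sH K)) : is_cycle (rot k c) = is_cycle c.
Proof.
rewrite /is_cycle size_rot rot_cycle map_rot; congr [&& _, _ & _].
apply: perm_uniq; apply: perm_cat; exact: perm_rot'.
Qed.

Lemma edge_disjoint_rot K k l (A B : seq (sH K)) : edge_disjoint (rot k A) (rot l B) = edge_disjoint A B.
Proof.
rewrite /edge_disjoint !map_rot.
have E : forall x, (x \in rot l B ++ rot l (map (@opp K) B)) = (x \in B ++ map (@opp K) B).
  by move=> x; rewrite mem_cat (mem_rot l B x) (mem_rot l _ x) mem_cat.
rewrite (eq_has E); congr (~~ _); apply: eq_has_r => x.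
by rewrite mem_cat (mem_rot k A x) (mem_rot k _ x) mem_cat.
Qed.

Lemma obstruct_rot K k l (A B : seq (sH K)) :
  vassiliev_obstruct A B -> vassiliev_obstruct (rot k A) (rot l B).
Proof.
case=> cA cB d c; split; rewrite ?is_cycle_rot ?edge_disjoint_rot //.
by rewrite crossings_rotl crossings_rotr.
Qed.

Lemma all_zip' S T (P : pred S) (Q : pred T) s t :
  all P s -> all Q t -> all (fun p => P p.1 && Q p.2) (zip s t).
Proof. by elim: s t => [|x s IH] [|y t] //= /andP[-> Ps] /andP[-> Qt]; rewrite IH. Qed.

Lemma uniq_split (T : eqType) (f : T -> T) X Y :
  uniq ((X ++ Y) ++ map f (X ++ Y)) -> uniq (X ++ map f X) && uniq (Y ++ map f Y).
Proof.
rewrite map_cat.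
have P : perm_eq ((X ++ Y) ++ map f X ++ map f Y) ((X ++ map f X) ++ Y ++ map f Y).
  by rewrite perm_catACA perm_refl.
by rewrite (perm_uniq P) cat_uniq => /and3P[-> _ ->].
Qed.

Lemma all_flatten' (T : Type) (P : pred T) L : all P (flatten L) = all (all P) L.
Proof. by elim: L => [|x L IH] //=; rewrite all_cat IH. Qed.


Definition TF := ('I_3 * bool)%type.
Definition FF := (nat + TF)%type.
Definition oppF (t : TF) : TF :=
  match t with (i, true) => (ordS i, false) | (i, false) => (ord_pred i, true) end.
Definition blkF (x : FF) : nat := match x with inl a => a %/ 2 | inr t => t.1 end.
Definition xposF (x : FF) : nat := match x with inl a => a %% 2 | inr t => if t.2 then 2 else 3 end.
Definition passF (a : nat) (T : seq TF) (a2 : nat) : seq (FF * FF) :=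
  zip (inl a :: map (fun t => inr (oppF t)) T) (map inr T ++ [:: inl a2]).
Definition crossF (p q : FF * FF) : bool :=
  (blkF p.1 == blkF q.1) && alternating (xposF p.1) (xposF q.1) (xposF p.2) (xposF q.2).
Definition pieceOK (a : nat) (T : seq TF) (a2 : nat) : bool :=
  all (fun p => blkF p.1 == blkF p.2) (passF a T a2) && uniq (T ++ map oppF T).
Definition O3 : seq 'I_3 := [:: @Ordinal 3 0 isT; @Ordinal 3 1 isT; @Ordinal 3 2 isT].
Definition ET : seq TF := [seq (i, b) | i <- O3, b <- [:: true; false]].
Definition allT : seq (seq TF) :=
  [:: [::]] ++ [seq [:: x] | x <- ET] ++ [seq [:: x; y] | x <- ET, y <- ET]
  ++ flatten [seq [seq [:: x; y; z] | y <- ET, z <- ET] | x <- ET].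
Definition goodP : seq (nat * seq TF * nat) :=
  flatten [seq [seq (a, T, a2) | a2 <- iota 0 6, T <- [seq T <- allT | pieceOK a T a2]] | a <- iota 0 6].
Definition cP (P Q : nat * seq TF * nat) :=
  count (fun pq => crossF pq.1 pq.2) [seq (p, q) | p <- passF P.1.1 P.1.2 P.2, q <- passF Q.1.1 Q.1.2 Q.2].
Definition condPQ (P Q : nat * seq TF * nat) :=
  uniq [:: P.1.1; P.2; Q.1.1; Q.2] && ~~ has (mem (Q.1.2 ++ map oppF Q.1.2)) P.1.2.
Definition propPQ (P Q : nat * seq TF * nat) :=
  let c := alternating P.1.1 Q.1.1 P.2 Q.2 : nat in (c <= cP P Q) && ~~ odd (cP P Q - c).
Lemma bigcheck : all (fun P => all (fun Q => condPQ P Q ==> propPQ P Q) goodP) goodP.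
Proof. Time vm_compute. exact erefl. Time Qed.

Arguments ET : simpl never.
Arguments allT : simpl never.
Arguments goodP : simpl never.
Lemma mem_ET (x : TF) : x \in ET.
Proof. by case: x => [[[|[|[|m]]] Hm] []]. Qed.

Lemma pieceOK_size a T a2 : pieceOK a T a2 -> size T <= 3.
Proof.
case/andP=> _ U.
have := uniq_leq_size U (fun x _ => mem_ET x).
rewrite size_cat size_map (_ : size ET = 6) // => h.
by move: h; rewrite addnn -mul2n -[6]/(2 * 3) leq_pmul2l.
Qed.

Lemma mem_allT T : size T <= 3 -> T \in allT.
Proof.
rewrite /allT; case: T => [|x [|y [|z [|w T]]]] H; rewrite mem_cat mem_cat mem_cat.
- by rewrite mem_head.
- by rewrite (map_f (fun x => [:: x]) (mem_ET x)) !orbT.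
- by rewrite (allpairs_f (fun x y => [:: x; y]) (mem_ET x) (mem_ET y)) !orbT.
- apply/orP; right; apply/orP; right; apply/orP; right.
  apply/flattenP; exists [seq [:: x; y0; z0] | y0 <- ET, z0 <- ET].
    by apply: (map_f (fun x => [seq [:: x; y0; z0] | y0 <- ET, z0 <- ET])); exact: mem_ET.
  by apply: (allpairs_f (fun y z => [:: x; y; z])); exact: mem_ET.
- by move: H => /=.
Qed.

Lemma mem_goodP a T a2 : a < 6 -> a2 < 6 -> pieceOK a T a2 -> (a, T, a2) \in goodP.
Proof.
move=> Ha Ha2 OK.
apply/flattenP; exists [seq (a, T, a2) | a2 <- iota 0 6, T <- [seq T <- allT | pieceOK a T a2]].
  by apply: (map_f (fun a => [seq (a, T, a2) | a2 <- iota 0 6, T <- [seq T <- allT | pieceOK a T a2]])); rewrite mem_iota.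
apply/allpairsPdep; exists a2, T; split => //; first by rewrite mem_iota.
by rewrite mem_filter OK mem_allT // (pieceOK_size OK).
Qed.

Lemma fin_main a a2 b b2 TA TB : a < 6 -> a2 < 6 -> b < 6 -> b2 < 6 ->
  pieceOK a TA a2 -> pieceOK b TB b2 -> condPQ (a, TA, a2) (b, TB, b2) ->
  propPQ (a, TA, a2) (b, TB, b2).
Proof.
move=> ha ha2 hb hb2 PA PB.
have := bigcheck; move/allP/(_ _ (mem_goodP ha ha2 PA))/allP/(_ _ (mem_goodP hb hb2 PB)).
by move/implyP.
Qed.


Lemma dep_if_true (b : bool) (E : b = true) (P : Type) (f : b = true -> P) (g : b = false -> P) :
  (if b as c return b = c -> P then f else g) (erefl b) = f E.
Proof. move: f g E; case: b => f g E //=; by rewrite (eq_irrelevance E (erefl true)). Qed.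
Lemma dep_if_false (b : bool) (E : b = false) (P : Type) (f : b = true -> P) (g : b = false -> P) :
  (if b as c return b = c -> P then f else g) (erefl b) = g E.
Proof. move: f g E; case: b => f g E //=; by rewrite (eq_irrelevance E (erefl false)). Qed.

Lemma ex_vert_old6 (G : sgraph) (lab : sH G -> nat) (h : sH G) (E : deg (vert h) == 6) :
  ex_vert_old lab h = inr (exist _ (vert h) E, blk lab h).
Proof. by rewrite /ex_vert_old (dep_if_true E). Qed.
Lemma ex_vert_old4 (G : sgraph) (lab : sH G -> nat) (h : sH G) (E : deg (vert h) != 6) :
  ex_vert_old lab h = inl (exist _ (vert h) E).
Proof. rewrite /ex_vert_old (dep_if_false (negbTE E)) /=. by congr inl; apply: val_inj. Qed.

Definition relab (r : nat) (s : bool) (x : nat) : nat :=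
  if s then (r + x) %% 6 else (r + 6 - x) %% 6.

Lemma relab_check : all (fun r => all (fun s => all (fun x1 => all (fun x2 =>
  ((relab r s x1 == relab r s x2) == (x1 == x2)) &&
  all (fun x3 => all (fun x4 =>
    alternating (relab r s x1) (relab r s x2) (relab r s x3) (relab r s x4) ==
    alternating x1 x2 x3 x4) (iota 0 6)) (iota 0 6)) (iota 0 6)) (iota 0 6))
  [:: true; false]) (iota 0 6).
Proof. Time vm_compute. exact erefl. Time Qed.

Lemma allI (f : pred nat) x : all f (iota 0 6) -> x < 6 -> f x.
Proof. by move/allP/(_ x); rewrite mem_iota. Qed.

Lemma relab_spec r s x1 x2 x3 x4 : r < 6 -> x1 < 6 -> x2 < 6 -> x3 < 6 -> x4 < 6 ->
  ((relab r s x1 == relab r s x2) = (x1 == x2)) /\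
  alternating (relab r s x1) (relab r s x2) (relab r s x3) (relab r s x4) = alternating x1 x2 x3 x4.
Proof.
move=> hr h1 h2 h3 h4.
have := allI relab_check hr => /allP/(_ s).
rewrite !inE; case: s => /(_ isT) H;
 have /andP[/eqP -> H'] := allI (allI H h1) h2;
 by split => //; apply/eqP; apply: (allI (allI H' h3) h4).
Qed.

Lemma relab_lt r s x : relab r s x < 6.
Proof. by rewrite /relab; case: s; apply: ltn_pmod. Qed.

Lemma alt23 x y z w : (x == 2) || (x == 3) -> (z == 2) || (z == 3) -> alternating x y z w = false.
Proof.
have H : forall y, strictly_between 2 3 y = false.
  by move=> y0; rewrite /strictly_between /=; case: y0 => [|[|[|]]].
have H' : forall y, strictly_between 3 2 y = false.
  by move=> y0; rewrite /strictly_between /=; case: y0 => [|[|[|]]].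
move=> /orP[]/eqP-> /orP[]/eqP->; rewrite /alternating ?H ?H' ?andbF //.
- by rewrite [uniq _]/= !inE eqxx /= ?orbT.
- by rewrite [uniq _]/= !inE eqxx /= ?orbT.
Qed.

Lemma sb23 a c : a != 2 -> a != 3 -> c != 2 -> c != 3 ->
  strictly_between a c 2 = strictly_between a c 3.
Proof. by rewrite /strictly_between => *; apply/idP/idP => /andP[h1 h2]; apply/andP; split; lia. Qed.

Lemma alt23' x y z w : (y == 2) || (y == 3) -> (w == 2) || (w == 3) -> alternating x y z w = false.
Proof.
move=> Hy Hw; apply/negP => /andP[U N].
move: U; rewrite /= !inE !negb_or andbT => /and3P[/and3P[xy xz xw] /andP[yz yw] zw].
move: Hy Hw xy xw yz zw yw N => /orP[]/eqP-> /orP[]/eqP-> xy xw yz zw yw.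
- by rewrite eqxx in yw.
- by rewrite (sb23 xy xw _ zw) ?eqxx // eq_sym.
- by rewrite (sb23 xw xy zw _) ?eqxx // eq_sym.
- by rewrite eqxx in yw.
Qed.

Section Exp.
Variables (G : sgraph) (lab : sH G -> nat).
Local Notation G' := (expand lab).

Definition Tri := (V6 G * 'I_3 * bool)%type.
Definition getl (x : exH G) : option (sH G) := if x is inl h then Some h else None.
Definition isl (x : exH G) : bool := if x is inl _ then true else false.
Definition Piece := (sH G * seq Tri * sH G)%type.

Fixpoint go (h : sH G) (T : seq Tri) (s : seq (exH G)) (z : sH G) : seq Piece :=
  match s with
  | [::] => [:: (h, T, z)]
  | inl h' :: s' => (h, T, h') :: go h' [::] s' z
  | inr t :: s' => go h (rcons T t) s' z
  end.

Definition ppass (P : Piece) : seq (sH G' * sH G') :=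
  @lpass G' (inl P.1.1) (map inr P.1.2) (inl P.2).
Definition pG (P : Piece) : sH G * sH G := (opp P.1.1, P.2).

Lemma go_pass h T s z : @lpass G' (inl h) (map inr T ++ s) (inl z) = flatten (map ppass (go h T s z)).
Proof.
elim: s h T => [|[h'|t] s IH] h T /=.
- by rewrite cats0 /ppass /= cats0.
- by rewrite lpass_cat -(IH h' [::]).
- by rewrite -(IH h (rcons T t)) map_rcons cat_rcons.
Qed.

Lemma go_passG h T s z : @lpass G h (pmap getl s) z = map pG (go h T s z).
Proof.
elim: s h T => [|[h'|t] s IH] h T //=.
by rewrite lpass_cons (IH h' [::]).
Qed.

Lemma go_mem h T s z P : P \in go h T s z ->
  [/\ P.1.1 = h \/ inl P.1.1 \in s, P.2 = z \/ inl P.2 \in s &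
      forall t, t \in P.1.2 -> t \in T \/ inr t \in s].
Proof.
elim: s h T => [|[h'|t] s IH] h T /=.
- by rewrite inE => /eqP -> /=; split; [left|left|left].
- rewrite inE => /orP[/eqP -> /= | /IH [H1 H2 H3]].
    by split; [left | right; rewrite mem_head | left].
  split.
  + by right; case: H1 => [->|H]; rewrite inE ?eqxx ?H ?orbT.
  + by case: H2 => [->|H]; [left|right; rewrite inE H orbT].
  + by move=> t /H3 [//|H]; right; rewrite inE H orbT.
- move=> /IH [H1 H2 H3]; split.
  + by case: H1 => [->|H]; [left|right; rewrite inE].
  + by case: H2 => [->|H]; [left|right; rewrite inE].
  + move=> t' /H3 [|H]; last by right; rewrite inE H orbT.
    by rewrite mem_rcons inE => /orP[/eqP->|H]; [right; rewrite mem_head|left].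
Qed.

Lemma go_uniq h T s z : uniq ((map inr T ++ s) ++ map (@ex_opp G) (map inr T ++ s)) ->
  forall P, P \in go h T s z -> uniq (map inr P.1.2 ++ map (@ex_opp G) (map inr P.1.2)).
Proof.
elim: s h T => [|[h'|t] s IH] h T /=.
- by rewrite cats0 => U P; rewrite inE => /eqP ->.
- move=> U P; have /andP[U1 U2] := uniq_split U.
  rewrite inE => /orP[/eqP -> // | ]; apply: IH.
  by have /andP[_ ->] := uniq_split (X := [:: inl h']) U2.
- by rewrite -!cat_rcons -!map_rcons; apply: IH.
Qed.

Definition gvx (x : exH G) : sV G := match x with inl h => vert h | inr (w, _, _) => val w end.
Definition gvV (u : exV G) : sV G := match u with inl w => val w | inr (w, _) => val w end.

Lemma gvV_vert x : gvV (ex_vert lab x) = gvx x.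
Proof.
case: x => [h|[[w i] b]] //=.
by case: (boolP (deg (vert h) == 6)) => E; [rewrite (ex_vert_old6 lab E) | rewrite (ex_vert_old4 lab E)].
Qed.

Lemma gvx_opp_tri (t : Tri) : gvx (ex_opp (inr t)) = gvx (inr t).
Proof. by case: t => [[w i] []]. Qed.

Lemma lpass_at (y : exH G) (T : seq Tri) (z : exH G) (v : sV G) : gvx (ex_opp y) = v ->
  all (fun p => ex_vert lab p.1 == ex_vert lab p.2) (@lpass G' y (map inr T) z) ->
  [&& all (fun p => (gvx p.1 == v) && (gvx p.2 == v)) (@lpass G' y (map inr T) z),
      all (fun t => gvx (inr t) == v) T & gvx z == v].
Proof.
elim: T y => [|t T IH] y Hy.
- rewrite /lpass /= andbT => /eqP E.
  have Ez : gvx z = v by rewrite -gvV_vert -E gvV_vert.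
  by rewrite Hy Ez eqxx.
- rewrite [map _ _]/= !lpass_cons.
  case: t => [[w i] b] /= /andP[E H].
  have Et : val w = v by rewrite -Hy -[gvx (ex_opp y)]gvV_vert (eqP E).
  have /and3P[H1 H2 H3] := IH (inr (w, i, b)) (etrans (gvx_opp_tri (w, i, b)) Et) H.
  by rewrite Hy Et eqxx H1 H2 H3.
Qed.

Hypothesis wf : wf_star_graph G.
Hypothesis Hl : expansion_labeling lab.

Lemma lab_at v : deg v = 6 -> exists r s, r < 6 /\
  forall h, vert h = v -> lab h = relab r s (xpos h) /\ xpos h < 6.
Proof.
move=> Dv; have [r [s H]] := Hl Dv.
exists (r %% 6), s; split; first exact: ltn_pmod.
move=> h Vh.
have xl : xpos h < 6 by rewrite -Dv -Vh; case: wf => _ [Hx _]; exact: Hx.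
split=> //; rewrite (H h Vh) /relab; case: s {H}.
- by rewrite modnDml.
- by rewrite -!addnBA ?modnDml // ltnW.
Qed.

Lemma lab_lt v h : deg v = 6 -> vert h = v -> lab h < 6.
Proof. by move=> Dv Vh; have [r [s [_ H]]] := lab_at Dv; rewrite (H h Vh).1 relab_lt. Qed.

Definition alpha (x : exH G) : FF :=
  match x with inl h => inl (lab h) | inr (w, i, b) => inr (i, b) end.
Definition triF (t : Tri) : TF := (t.1.2, t.2).

Lemma inr_inj' (A B : Type) : injective (@inr A B).
Proof. by move=> a b []. Qed.

Lemma inl_eq (A B : eqType) (a b : A) : (@inl A B a == inl b) = (a == b).
Proof. by []. Qed.

Lemma inr_eq (A B : eqType) (a b : B) : (@inr A B a == inr b) = (a == b).
Proof. by []. Qed.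

Lemma gad_vert v (E : deg v == 6) x : gvx x = v ->
  ex_vert lab x = inr (exist _ v E, inord (blkF (alpha x))) /\ blkF (alpha x) < 3.
Proof.
case: x => [h|[[w i] b]] /= Hv.
- have E' : deg (vert h) == 6 by rewrite Hv.
  have hl : lab h < 6 := lab_lt (eqP E) Hv.
  rewrite (ex_vert_old6 lab E'); split; last by rewrite ltn_divLR.
  by congr (inr (_, _)); apply: val_inj; rewrite /= Hv.
- split => //; congr (inr (_, _)); [by apply: val_inj | by rewrite inord_val].
Qed.

Lemma gad_eq v (E : deg v == 6) x y : gvx x = v -> gvx y = v ->
  (ex_vert lab x == ex_vert lab y) = (blkF (alpha x) == blkF (alpha y)).
Proof.
move=> Hx Hy; have [-> lx] := gad_vert E Hx; have [-> ly] := gad_vert E Hy.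
by rewrite inr_eq xpair_eqE eqxx /= -val_eqE /= !inordK.
Qed.

Lemma gad_xpos v (E : deg v == 6) x : gvx x = v -> ex_xpos lab x = xposF (alpha x).
Proof. by case: x => [h|[[w i] b]] /= Hv; rewrite ?Hv ?E. Qed.

Lemma gad_inj v (E : deg v == 6) x y : gvx x = v -> gvx y = v -> alpha x = alpha y -> x = y.
Proof.
case: x => [h|[[w i] b]]; case: y => [h'|[[w' i'] b']] //= Hx Hy.
- move=> [] El; have [r [s [hr H]]] := lab_at (eqP E).
  have [l1 x1] := H h Hx; have [l2 x2] := H h' Hy.
  have Ex : xpos h = xpos h'.
    apply/eqP; rewrite -(relab_spec s hr x1 x2 (isT : 0 < 6) (isT : 0 < 6)).1.
    by rewrite -l1 -l2 El.
  case: wf => _ [_ Hinj]; congr inl; apply: Hinj => //; by rewrite Hx Hy.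
- move=> [] -> ->; have -> : w = w' by apply: val_inj; rewrite /= Hx Hy.
  done.
Qed.

Lemma alpha_opp_tri t : alpha (ex_opp (inr t)) = inr (oppF (triF t)).
Proof. by case: t => [[w i] []]. Qed.

Lemma alpha_tri t : alpha (inr t) = inr (triF t).
Proof. by case: t => [[w i] b]. Qed.

Lemma map_lpass y T z :
  map (fun p => (alpha p.1, alpha p.2)) (@lpass G' y (map inr T) z) =
  zip (alpha (ex_opp y) :: map (fun t => inr (oppF t)) (map triF T))
      (map inr (map triF T) ++ [:: alpha z]).
Proof.
elim: T y => [|t T IH] y; first by rewrite /lpass.
by rewrite [map inr _]/= lpass_cons map_cons IH alpha_opp_tri alpha_tri.
Qed.

Lemma map_ppass P : map (fun p => (alpha p.1, alpha p.2)) (ppass P) =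
  passF (lab (opp P.1.1)) (map triF P.1.2) (lab P.2).
Proof. by rewrite /ppass map_lpass. Qed.

Lemma tri_empty h T z : deg (vert (opp h)) != 6 ->
  all (fun p => ex_vert lab p.1 == ex_vert lab p.2) (@lpass G' (inl h) (map inr T) z) -> T = [::].
Proof.
case: T => [//|[[w i] b] T] N.
by rewrite [map _ _]/= lpass_cons /= (ex_vert_old4 lab N).
Qed.

Lemma list_at T v : all (fun t => gvx (inr t) == v) T ->
  forall x, x \in map inr T ++ map (@ex_opp G) (map inr T) -> gvx x = v.
Proof.
move=> /allP H x; rewrite mem_cat => /orP[] /mapP [y yin ->].
- by apply/eqP; apply: H.
- move: yin => /mapP [t tin ->]; rewrite gvx_opp_tri; apply/eqP; exact: H.
Qed.

Lemma map_alpha_L T : map alpha (map inr T ++ map (@ex_opp G) (map inr T)) =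
  map inr (map triF T ++ map oppF (map triF T)).
Proof.
rewrite !map_cat -!map_comp; congr (_ ++ _); apply: eq_map => t /=.
- exact: alpha_tri.
- exact: alpha_opp_tri.
Qed.

Lemma local P Q :
  all (fun p => ex_vert lab p.1 == ex_vert lab p.2) (ppass P) ->
  all (fun p => ex_vert lab p.1 == ex_vert lab p.2) (ppass Q) ->
  uniq (map inr P.1.2 ++ map (@ex_opp G) (map inr P.1.2)) ->
  uniq (map inr Q.1.2 ++ map (@ex_opp G) (map inr Q.1.2)) ->
  ~~ has (mem (map inr Q.1.2 ++ map (@ex_opp G) (map inr Q.1.2))) (map inr P.1.2) ->
  uniq [:: opp P.1.1; P.2; opp Q.1.1; Q.2] ->
  (@is_crossing G (pG P) (pG Q) : nat) <= \sum_(p <- ppass P) \sum_(q <- ppass Q) (@is_crossing G' p q : nat)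
  /\ ~~ odd (\sum_(p <- ppass P) \sum_(q <- ppass Q) (@is_crossing G' p q : nat) - @is_crossing G (pG P) (pG Q)).
Proof.
case: P => [[hP TP] h2P]; case: Q => [[hQ TQ] h2Q] /= VP VQ UP UQ D U.
move Hv : (vert (opp hP)) => v; move Hw : (vert (opp hQ)) => w.
have /and3P[AP TPat /eqP zP] := @lpass_at (inl hP) TP (inl h2P) v Hv VP.
have /and3P[AQ TQat /eqP zQ] := @lpass_at (inl hQ) TQ (inl h2Q) w Hw VQ.
rewrite /= in zP zQ.
have [Evw|Nvw] := eqVneq v w; last first.
  have -> : @is_crossing G (pG (hP, TP, h2P)) (pG (hQ, TQ, h2Q)) = false.
    by rewrite /is_crossing /= Hv Hw (negbTE Nvw).
  rewrite big1_seq //= => p pin; rewrite big1_seq //= => q qin.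
  apply/eqP; rewrite eqb0 /is_crossing; apply/negP => /andP[/eqP Ev _].
  have /andP[/eqP Hp _] := allP AP p pin; have /andP[/eqP Hq _] := allP AQ q qin.
  have : gvx p.1 = gvx q.1 by rewrite -!gvV_vert; exact: (congr1 gvV Ev).
  by rewrite Hp Hq => /eqP; rewrite (negbTE Nvw).
rewrite -Evw in Hw AQ TQat zQ; clear Evw.
have [E6|N6] := boolP (deg v == 6); last first.
  have N6P : deg (vert (opp hP)) != 6 by rewrite Hv.
  have N6Q : deg (vert (opp hQ)) != 6 by rewrite Hw.
  have N6P2 : deg (vert h2P) != 6 by rewrite zP.
  have N6Q2 : deg (vert h2Q) != 6 by rewrite zQ.
  have ET : TP = [::] := tri_empty N6P VP; have EQ : TQ = [::] := tri_empty N6Q VQ; rewrite {}ET {}EQ in VP VQ UP UQ D AP AQ TPat TQat *.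
  rewrite /ppass /lpass /= !big_seq1 /is_crossing /= !(ex_vert_old4 lab N6P, ex_vert_old4 lab N6Q).
  rewrite (negbTE N6P) (negbTE N6Q) (negbTE N6P2) (negbTE N6Q2) inl_eq -val_eqE /=.
  by rewrite subnn leqnn.
have Dv : deg v = 6 := eqP E6.
have [r [s [hr Hrs]]] := lab_at Dv.
have [l1 x1] := Hrs _ Hv; have [l2 x2] := Hrs _ zP; have [l3 x3] := Hrs _ Hw; have [l4 x4] := Hrs _ zQ.
have la := lab_lt Dv Hv; have la2 := lab_lt Dv zP; have lb := lab_lt Dv Hw; have lb2 := lab_lt Dv zQ.
have Hc : @is_crossing G (pG (hP, TP, h2P)) (pG (hQ, TQ, h2Q)) =
          alternating (lab (opp hP)) (lab (opp hQ)) (lab h2P) (lab h2Q).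
  by rewrite /is_crossing /= Hv Hw eqxx l1 l2 l3 l4 (relab_spec s hr x1 x3 x2 x4).2.
have Hc' : \sum_(p <- ppass (hP, TP, h2P)) \sum_(q <- ppass (hQ, TQ, h2Q)) (@is_crossing G' p q : nat) =
    cP (lab (opp hP), map triF TP, lab h2P) (lab (opp hQ), map triF TQ, lab h2Q).
  rewrite /cP count_allpairs /= -(map_ppass (hP, TP, h2P)) -(map_ppass (hQ, TQ, h2Q)) big_map.
  apply: eq_big_seq => p pin; rewrite big_map; apply: eq_big_seq => q qin /=.
  have /andP[/eqP p1 /eqP p2] := allP AP p pin; have /andP[/eqP q1 /eqP q2] := allP AQ q qin.
  rewrite /is_crossing /crossF /=.
  by rewrite (gad_eq E6 p1 q1) (gad_xpos E6 p1) (gad_xpos E6 p2) (gad_xpos E6 q1) (gad_xpos E6 q2).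
have okP : pieceOK (lab (opp hP)) (map triF TP) (lab h2P).
  rewrite /pieceOK -(map_ppass (hP, TP, h2P)) all_map; apply/andP; split.
  - apply/allP => p pin /=; have /andP[/eqP p1 /eqP p2] := allP AP p pin.
    by rewrite -(gad_eq E6 p1 p2); exact: (allP VP p pin).
  - rewrite -(map_inj_uniq (@inr_inj' nat TF)) -map_alpha_L map_inj_in_uniq // => x y xin yin.
    by apply: (gad_inj E6); apply: (list_at TPat).
have okQ : pieceOK (lab (opp hQ)) (map triF TQ) (lab h2Q).
  rewrite /pieceOK -(map_ppass (hQ, TQ, h2Q)) all_map; apply/andP; split.
  - apply/allP => p pin /=; have /andP[/eqP p1 /eqP p2] := allP AQ p pin.
    by rewrite -(gad_eq E6 p1 p2); exact: (allP VQ p pin).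
  - rewrite -(map_inj_uniq (@inr_inj' nat TF)) -map_alpha_L map_inj_in_uniq // => x y xin yin.
    by apply: (gad_inj E6); apply: (list_at TQat).
have cond : condPQ (lab (opp hP), map triF TP, lab h2P) (lab (opp hQ), map triF TQ, lab h2Q).
  rewrite /condPQ; apply/andP; split.
  - have Hall : all (fun h => vert h == v) [:: opp hP; h2P; opp hQ; h2Q] by rewrite /= Hv zP Hw zQ eqxx.
    change (uniq (map lab [:: opp hP; h2P; opp hQ; h2Q])).
    rewrite map_inj_in_uniq // => x y xin yin El.
    have : inl x = inl y :> exH G.
      apply: (gad_inj E6) => /=; [exact/eqP/(allP Hall) | exact/eqP/(allP Hall) | by rewrite El].
    by case.
  - apply/hasP => [[t' /mapP [t tin ->] tmem]].
    have : inr (triF t) \in map alpha (map inr TQ ++ map (@ex_opp G) (map inr TQ)).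
      by rewrite map_alpha_L map_f.
    case/mapP => y yin Ey.
    have Ety : inr t = y.
      apply: (gad_inj E6); last by rewrite alpha_tri.
      - by apply/eqP; exact: (allP TPat).
      - exact: (list_at TQat yin).
    move/negP: D; apply; apply/hasP; exists (inr t); first exact: map_f.
    by rewrite Ety.
have := fin_main la la2 lb lb2 okP okQ cond.
rewrite /propPQ /= -Hc -Hc' => /andP[H1 H2]; split=> //.
Qed.

Lemma xpos23 x : ~~ isl x -> (ex_xpos lab x == 2) || (ex_xpos lab x == 3).
Proof. by case: x => [//|[[w i] []]]. Qed.

Lemma pass_tri (A : seq (exH G)) : ~~ has isl A ->
  all (fun p => ~~ isl p.1 && ~~ isl p.2) (@passages G' A).
Proof.
move=> /hasPn NA; rewrite /passages; apply: (all_zip' (P := fun x => ~~ isl x) (Q := fun x => ~~ isl x)).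
- rewrite all_map; apply/allP => x xin /=; have := NA x xin.
  by case: x {xin} => [//|[[w i] []]].
- by apply/allP => x; rewrite mem_rot => xin; exact: NA.
Qed.

Lemma cross_tri (A B : seq (exH G)) : ~~ has isl A \/ ~~ has isl B -> @crossings G' A B = 0.
Proof.
move=> H; apply/eqP; rewrite -leqn0 leqNgt -has_count; apply/hasP => [[pq /allpairsP [[p q] [pin qin ->]]]] /=.
rewrite /is_crossing => /andP[_]; case: H => /pass_tri /allP H.
- have /andP[h1 h2] := H p pin.
  by rewrite (alt23 (xpos q.1) (xpos q.2) (xpos23 h1) (xpos23 h2)).
- have /andP[h1 h2] := H q qin.
  by rewrite (alt23' (xpos p.1) (xpos p.2) (xpos23 h1) (xpos23 h2)).
Qed.

Lemma pmap_getl s : map inl (pmap getl s) = filter isl s.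
Proof. by elim: s => [|[h|t] s IH] //=; rewrite IH. Qed.

Lemma proj_sub h0 s : subseq (map inl ((h0 :: pmap getl s) ++ map (@opp G) (h0 :: pmap getl s)))
   ((inl h0 :: s) ++ map (@ex_opp G) (inl h0 :: s)).
Proof.
have S1 : subseq (map inl (h0 :: pmap getl s)) (inl h0 :: s).
  by rewrite [map _ _]/= pmap_getl /= eqxx filter_subseq.
rewrite map_cat; apply: cat_subseq => //.
have -> : map inl (map (@opp G) (h0 :: pmap getl s)) = map (@ex_opp G) (map inl (h0 :: pmap getl s)).
  by rewrite -!map_comp.
exact: map_subseq.
Qed.

Lemma mem_proj h0 s x : x = h0 \/ inl x \in s -> x \in h0 :: pmap getl s.
Proof.
case=> [->|H]; first exact: mem_head.
by rewrite inE mem_pmap (map_f getl H) orbT.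
Qed.

Lemma inl_inj' (A B : Type) : injective (@inl A B).
Proof. by move=> a b []. Qed.

Lemma arith a b : a <= b -> ~~ odd (b - a) -> b = a + ((b - a)./2 + (b - a)./2).
Proof.
move=> le ev; rewrite addnn.
have := odd_double_half (b - a); rewrite (negbTE ev) add0n => ->.
by rewrite subnKC.
Qed.

Lemma arith2 a k : a + (k + k) = 1 -> a = 1.
Proof. lia. Qed.

Lemma proj_obstruct h0 s h1 t :
  @vassiliev_obstruct G' (inl h0 :: s) (inl h1 :: t) ->
  @vassiliev_obstruct G (h0 :: pmap getl s) (h1 :: pmap getl t).
Proof.
case=> /and3P[_ UA CA] /and3P[_ UB CB] dAB cr.
have SA := proj_sub h0 s; have SB := proj_sub h1 t.
have UA' : uniq ((h0 :: pmap getl s) ++ map (@opp G) (h0 :: pmap getl s)).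
  by rewrite -(map_inj_uniq (@inl_inj' (sH G) Tri)); exact: (subseq_uniq SA UA).
have UB' : uniq ((h1 :: pmap getl t) ++ map (@opp G) (h1 :: pmap getl t)).
  by rewrite -(map_inj_uniq (@inl_inj' (sH G) Tri)); exact: (subseq_uniq SB UB).
have passA : @passages G' (inl h0 :: s) = flatten (map ppass (go h0 [::] s h0)).
  by rewrite passages_cons; exact: (go_pass h0 [::] s h0).
have passB : @passages G' (inl h1 :: t) = flatten (map ppass (go h1 [::] t h1)).
  by rewrite passages_cons; exact: (go_pass h1 [::] t h1).
have passA' : @passages G (h0 :: pmap getl s) = map pG (go h0 [::] s h0).
  by rewrite passages_cons; exact: (go_passG h0 [::] s h0).
have passB' : @passages G (h1 :: pmap getl t) = map pG (go h1 [::] t h1).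
  by rewrite passages_cons; exact: (go_passG h1 [::] t h1).
have VA : forall P, P \in go h0 [::] s h0 -> all (fun p => ex_vert lab p.1 == ex_vert lab p.2) (ppass P).
  move: CA; rewrite cycle_lpass -passages_cons passA all_flatten' all_map => /allP H P Pin.
  exact: (H P Pin).
have VB : forall P, P \in go h1 [::] t h1 -> all (fun p => ex_vert lab p.1 == ex_vert lab p.2) (ppass P).
  move: CB; rewrite cycle_lpass -passages_cons passB all_flatten' all_map => /allP H P Pin.
  exact: (H P Pin).
have UPa : uniq (s ++ map (@ex_opp G) s).
  by have /andP[_ ->] := uniq_split (X := [:: inl h0]) UA.
have UPb : uniq (t ++ map (@ex_opp G) t).
  by have /andP[_ ->] := uniq_split (X := [:: inl h1]) UB.
have UPP := @go_uniq h0 [::] s h0 UPa.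
have UQQ := @go_uniq h1 [::] t h1 UPb.
have CA' : cycle (fun h h' => vert (opp h) == vert h') (h0 :: pmap getl s).
  rewrite cycle_lpass -passages_cons passA' all_map; apply/allP => P Pin /=.
  have := @lpass_at (inl P.1.1) P.1.2 (inl P.2) (vert (opp P.1.1)) erefl (VA P Pin).
  by case/and3P => _ _; rewrite eq_sym.
have CB' : cycle (fun h h' => vert (opp h) == vert h') (h1 :: pmap getl t).
  rewrite cycle_lpass -passages_cons passB' all_map; apply/allP => P Pin /=.
  have := @lpass_at (inl P.1.1) P.1.2 (inl P.2) (vert (opp P.1.1)) erefl (VB P Pin).
  by case/and3P => _ _; rewrite eq_sym.
have DG : edge_disjoint (h0 :: pmap getl s) (h1 :: pmap getl t).
  apply/hasP => [[x xA xB]].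
  move/negP: dAB; apply; apply/hasP; exists (inl x).
  - exact: (mem_subseq SA (map_f inl xA)).
  - exact: (mem_subseq SB (map_f inl xB)).
have Ecr' : @crossings G' (inl h0 :: s) (inl h1 :: t) =
    \sum_(P <- go h0 [::] s h0) \sum_(Q <- go h1 [::] t h1)
      \sum_(p <- ppass P) \sum_(q <- ppass Q) (@is_crossing G' p q : nat).
  rewrite crossingsE /crossS passA passB big_flatten big_map; apply: eq_bigr => P _.
  rewrite (eq_bigr (fun p => \sum_(Q <- go h1 [::] t h1) \sum_(q <- ppass Q) (@is_crossing G' p q : nat))); last first.
    by move=> p _; rewrite big_flatten big_map.
  exact: exchange_seq.
have EcrG : @crossings G (h0 :: pmap getl s) (h1 :: pmap getl t) =
    \sum_(P <- go h0 [::] s h0) \sum_(Q <- go h1 [::] t h1) (@is_crossing G (pG P) (pG Q) : nat).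
  by rewrite crossingsE /crossS passA' passB' big_map; apply: eq_bigr => P _; rewrite big_map.
have loc : forall P Q, P \in go h0 [::] s h0 -> Q \in go h1 [::] t h1 ->
   (@is_crossing G (pG P) (pG Q) : nat) <= \sum_(p <- ppass P) \sum_(q <- ppass Q) (@is_crossing G' p q : nat)
   /\ ~~ odd (\sum_(p <- ppass P) \sum_(q <- ppass Q) (@is_crossing G' p q : nat) - @is_crossing G (pG P) (pG Q)).
  move=> P Q Pin Qin.
  have [mP1 mP2 mP3] := go_mem Pin; have [mQ1 mQ2 mQ3] := go_mem Qin.
  apply: local; [exact: VA | exact: VB | exact: UPP | exact: UQQ | |].
  - apply/hasP => [[x /mapP [u uin ->] xin]].
    have ua : inr u \in (inl h0 :: s) ++ map (@ex_opp G) (inl h0 :: s).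
      by case: (mP3 u uin) => // H; rewrite mem_cat inE H orbT.
    have ub : inr u \in (inl h1 :: t) ++ map (@ex_opp G) (inl h1 :: t).
      have xin' : inr u \in map inr Q.1.2 ++ map (@ex_opp G) (map inr Q.1.2) := xin.
      rewrite mem_cat in xin'; case/orP: xin' => /mapP [y yin Ey].
      + case: (mQ3 y yin) => // H.
        by rewrite Ey mem_cat inE H orbT.
      + move: yin => /mapP [y' y'in Ey']; subst y.
        case: (mQ3 y' y'in) => // H.
        rewrite Ey mem_cat; apply/orP; right; apply: map_f.
        by rewrite inE H orbT.
    by move/negP: dAB; apply; apply/hasP; exists (inr u).
  - have a1 := mem_proj mP1; have a2 := mem_proj mP2.
    have b1 := mem_proj mQ1; have b2 := mem_proj mQ2.
    have dAB' : forall x y, x \in (h0 :: pmap getl s) ++ map (@opp G) (h0 :: pmap getl s) ->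
        y \in (h1 :: pmap getl t) ++ map (@opp G) (h1 :: pmap getl t) -> x != y.
      move=> x y xi yi; apply/eqP => exy; move/hasP: DG; apply; exists x => //; by rewrite exy.
    have nA : opp P.1.1 != P.2.
      apply/eqP => e; move: UA'; rewrite cat_uniq => /and3P[_ /hasP H _]; apply: H.
      by exists (opp P.1.1); [exact: map_f | rewrite e].
    have nB : opp Q.1.1 != Q.2.
      apply/eqP => e; move: UB'; rewrite cat_uniq => /and3P[_ /hasP H _]; apply: H.
      by exists (opp Q.1.1); [exact: map_f | rewrite e].
    have oa1 : opp P.1.1 \in (h0 :: pmap getl s) ++ map (@opp G) (h0 :: pmap getl s).
      by rewrite mem_cat map_f ?orbT.
    have oa2 : P.2 \in (h0 :: pmap getl s) ++ map (@opp G) (h0 :: pmap getl s).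
      by rewrite mem_cat a2.
    have ob1 : opp Q.1.1 \in (h1 :: pmap getl t) ++ map (@opp G) (h1 :: pmap getl t).
      by rewrite mem_cat map_f ?orbT.
    have ob2 : Q.2 \in (h1 :: pmap getl t) ++ map (@opp G) (h1 :: pmap getl t).
      by rewrite mem_cat b2.
    rewrite /= !inE !negb_or andbT nA nB !dAB' //.
have Hsum : \sum_(P <- go h0 [::] s h0) \sum_(Q <- go h1 [::] t h1)
      \sum_(p <- ppass P) \sum_(q <- ppass Q) (@is_crossing G' p q : nat) =
    \sum_(P <- go h0 [::] s h0) \sum_(Q <- go h1 [::] t h1) (@is_crossing G (pG P) (pG Q) : nat) +
    (\sum_(P <- go h0 [::] s h0) \sum_(Q <- go h1 [::] t h1)
      ((\sum_(p <- ppass P) \sum_(q <- ppass Q) (@is_crossing G' p q : nat) - @is_crossing G (pG P) (pG Q))./2) +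
     \sum_(P <- go h0 [::] s h0) \sum_(Q <- go h1 [::] t h1)
      ((\sum_(p <- ppass P) \sum_(q <- ppass Q) (@is_crossing G' p q : nat) - @is_crossing G (pG P) (pG Q))./2)).
  rewrite -!big_split /=; apply: eq_big_seq => P Pin; rewrite -!big_split /=.
  apply: eq_big_seq => Q Qin /=; have [l1 l2] := loc P Q Pin Qin.
  exact: arith.
split => //.
- by apply/and3P; split.
- by apply/and3P; split.
- by move: cr; rewrite Ecr' Hsum EcrG; apply: arith2.
Qed.
End Exp.

Unset Implicit Arguments.

Theorem lemma3p2 (G : sgraph) (lab : sH G -> nat) :
  wf_star_graph G ->
  (forall v : sV G, deg v = 4 \/ deg v = 6) ->
  expansion_labeling lab ->
  has_vassiliev_obstruct (expand lab) ->
  has_vassiliev_obstruct G.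
Proof.
move=> wf _ Hl [A [B ob]].
have [cA cB dAB cr] := ob.
have hA : has (@isl G) A.
  apply/negPn/negP => nA; move: cr; by rewrite (@cross_tri G lab A B (or_introl nA)).
have hB : has (@isl G) B.
  apply/negPn/negP => nB; move: cr; by rewrite (@cross_tri G lab A B (or_intror nB)).
case/hasP: hA => x; case: x => [h0 xA _|t _ //].
case/hasP: hB => y; case: y => [h1 yB _|t _ //].
have := obstruct_rot (index (inl h0) A) (index (inl h1) B) ob.
rewrite (rot_index xA) (rot_index yB) => ob'.
eexists; eexists; exact: (proj_obstruct wf Hl ob').
Qed.
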